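(* Let $M\in\mathbb N$ and let $X(M)$ be the subshift defined below. Let $G_1'$ be the graph with one vertex and $2M+1$ loops named $\lambda,\rho_1,\dots,\rho_M,\eta_1,\dots,\eta_M$, and $G_1''$ the graph with one vertex and $M+2$ loops named $\lambda,\xi,\rho_1,\dots,\rho_M$; let $X_{G_1'},X_{G_1''}$ be their edge shifts (so $\mathcal B_n(X_{G_1'})$, resp. $\mathcal B_n(X_{G_1''})$, is the set of all words of length $n$ over the corresponding loop names). Then for every $n\ge1$ there exist bijections $$\{x\in P_n(X(M)):\text{the multiplier of }x\text{ is positive, neutral, or }\lambda^k\text{ for some }k\ge1\}\longrightarrow\mathcal B_n(X_{G_1'})$$ and $$\{x\in P_n(X(M)):\text{the multiplier of }x\text{ is negative, neutral, or a non-identity element of the submonoid generated by }\rho_1,\dots,\rho_M\}\longrightarrow\mathcal B_n(X_{G_1''}).$$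
   Context: Let $\Sigma_1=\{\lambda,\xi,\rho_1,\dots,\rho_M,\eta_1,\dots,\eta_M\}$. $\mathcal M_1(M)$ is the monoid with zero generated by $\Sigma_1$ and an identity $\mathbf 1$, subject only to the relations $\lambda\rho_i=\mathbf 1$, $\lambda\eta_i=0$, $\xi\eta_i=\mathbf 1$, $\xi\rho_i=0$ ($1\le i\le M$), $\mathbf 1$ is the identity and $0$ is absorbing; no other relations. $\mathit{red}:\Sigma_1^*\to\mathcal M_1(M)$ sends a word to the product of its letters (empty word to $\mathbf 1$). $X(M)=\{x\in\Sigma_1^{\mathbb Z}:\mathit{red}(x_i\cdots x_j)\neq 0\ \forall i\le j\}$ with shift $\sigma$; $P_n(X(M))=\{x\in X(M):\sigma^nx=x\}$, and the periodic defining block of $x\in P_n(X(M))$ is $x_0\cdots x_{n-1}$. $\mathcal M_1^+$ is the submonoid generated by $\rho_i,\eta_i$ and $\mathcal M_1^-$ the submonoid generated by $\lambda,\xi$. Every block $\alpha$ can be written $\alpha=\alpha_+\alpha_-$ with $\mathit{red}(\alpha_+)\in\mathcal M_1^+$, $\mathit{red}(\alpha_-)\in\mathcal M_1^-$; the multiplier of $\alpha$ (and of $\alpha^\infty$) is $\mathit{red}(\alpha_-\alpha_+)$, called positive if in $\mathcal M_1^+\setminus\{\mathbf 1\}$, negative if in $\mathcal M_1^-\setminus\{\mathbf 1\}$, neutral if equal to $\mathbf 1$. *)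

(* Defs.v *)
From mathcomp Require Import all_boot all_algebra.
Set Implicit Arguments. Unset Strict Implicit. Unset Printing Implicit Defensive.
Import GRing.Theory Num.Theory.

Inductive letter (M : nat) : Type :=
  | Lam : letter M
  | Xi  : letter M
  | Rho : 'I_M -> letter M
  | Eta : 'I_M -> letter M.
Arguments Lam {M}. Arguments Xi {M}.

Definition is_pos M (a : letter M) : bool :=
  match a with Rho _ | Eta _ => true | _ => false end.
Definition is_neg M (a : letter M) : bool :=
  match a with Lam | Xi => true | _ => false end.
Definition is_rho M (a : letter M) : bool :=
  match a with Rho _ => true | _ => false end.

(* Elements of the monoid M_1(M), represented by normal forms:
   None = 0, Some w = the reduced word w (no negative letter immediately
   followed by a positive letter; equivalently w = (positive word)(negative word)). *)
Definition mon M := option (seq (letter M)).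

(* One reduction step, the stack being stored reversed (top = head). *)
Definition step M (a : letter M) (s : mon M) : mon M :=
  match s with
  | None => None
  | Some st =>
      match a, st with
      | Rho _, Lam :: st' => Some st'   (* lambda rho_i = 1 *)
      | Eta _, Xi :: st'  => Some st'   (* xi eta_i = 1 *)
      | Rho _, Xi :: _    => None       (* xi rho_i = 0 *)
      | Eta _, Lam :: _   => None       (* lambda eta_i = 0 *)
      | _, _ => Some (a :: st)
      end
  end.

Definition red M (w : seq (letter M)) : mon M :=
  omap (@rev _) (foldl (fun s a => step a s) (Some [::]) w).

Definition shift M (x : int -> letter M) : int -> letter M := fun i => x (i + 1)%R.

Definition block M (x : int -> letter M) (i : int) (len : nat) : seq (letter M) :=
  [seq x (i + k%:Z)%R | k <- iota 0 len].

Definition in_X M (x : int -> letter M) : Prop :=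
  forall (i : int) (len : nat), red (block x i len.+1) <> None.

Definition in_Pn M (n : nat) (x : int -> letter M) : Prop :=
  in_X x /\ iter n (@shift M) x = x.

Definition defblock M (n : nat) (x : int -> letter M) := block x 0 n.

Definition in_Mplus M (m : mon M) : Prop := exists s, m = Some s /\ all (@is_pos M) s.
Definition in_Mminus M (m : mon M) : Prop := exists s, m = Some s /\ all (@is_neg M) s.

Definition is_multiplier M (alpha : seq (letter M)) (m : mon M) : Prop :=
  exists ap am, alpha = ap ++ am /\ in_Mplus (red ap) /\ in_Mminus (red am)
                /\ m = red (am ++ ap).

Definition mult_positive M (m : mon M) : Prop := in_Mplus m /\ m <> Some [::].
Definition mult_negative M (m : mon M) : Prop := in_Mminus m /\ m <> Some [::].
Definition mult_neutral M (m : mon M) : Prop := m = Some [::].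
Definition mult_lambda_power M (m : mon M) : Prop :=
  exists k, (0 < k)%N /\ m = Some (nseq k Lam).
Definition mult_rho_nonid M (m : mon M) : Prop :=
  exists s, m = Some s /\ all (@is_rho M) s /\ s <> [::].

Inductive edge1' (M : nat) : Type :=
  | E1'Lam : edge1' M | E1'Rho : 'I_M -> edge1' M | E1'Eta : 'I_M -> edge1' M.
Inductive edge1'' (M : nat) : Type :=
  | E1''Lam : edge1'' M | E1''Xi : edge1'' M | E1''Rho : 'I_M -> edge1'' M.

(* B_n of the edge shift of a one-vertex graph = all words of length n over its loops *)
Definition Bn (E : Type) (n : nat) := n.-tuple E.

Definition Pn_set1 (M n : nat) :=
  {x : int -> letter M | in_Pn n x /\
     exists m, is_multiplier (defblock n x) m /\
       (mult_positive m \/ mult_neutral m \/ mult_lambda_power m)}.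
Definition Pn_set2 (M n : nat) :=
  {x : int -> letter M | in_Pn n x /\
     exists m, is_multiplier (defblock n x) m /\
       (mult_negative m \/ mult_neutral m \/ mult_rho_nonid m)}.

(* Main.v *)
Require Import Defs.
From mathcomp Require Import all_boot all_algebra zify.
From Stdlib Require Import ProofIrrelevance FunctionalExtensionality ClassicalEpsilon.
Set Implicit Arguments. Unset Strict Implicit. Unset Printing Implicit Defensive.
Import GRing.Theory Num.Theory.

Definition run M (s : mon M) (w : seq (letter M)) := foldl (fun s a => step a s) s w.

Arguments run : simpl never.

Lemma red_run M (w : seq (letter M)) : red w = omap (@rev _) (run (Some [::]) w).
Proof. by []. Qed.

Lemma run_cat M (s : mon M) x y : run s (x ++ y) = run (run s x) y.
Proof. by rewrite /run foldl_cat. Qed.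

Lemma run_None M (w : seq (letter M)) : run None w = None.
Proof. by elim: w. Qed.

Lemma run_cons M (s : mon M) a w : run s (a :: w) = run (step a s) w.
Proof. by []. Qed.

Lemma pos_neg M (a : letter M) : is_pos a = ~~ is_neg a.
Proof. by case: a. Qed.

Lemma step_neg M (a : letter M) st : is_neg a -> step a (Some st) = Some (a :: st).
Proof. by case: a => //; case: st => // -[]. Qed.

Lemma step_posP M (a : letter M) P : is_pos a -> all (@is_pos M) P -> step a (Some P) = Some (a :: P).
Proof. by case: a => // i _; case: P => // -[] //. Qed.

Lemma step_app M (a c : letter M) st : is_pos c ->
  step a (Some (st ++ [:: c])) = omap (fun s => s ++ [:: c]) (step a (Some st)).
Proof. by case: c => // j _; case: st => [|h t]; case: a => *; try case: h. Qed.

Lemma run_bottom M (c : letter M) v : is_pos c -> forall st,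
  run (Some (st ++ [:: c])) v = omap (fun s => s ++ [:: c]) (run (Some st) v).
Proof.
move=> pc; elim: v => [//|a v IH] st; rewrite !run_cons step_app //.
by case: (step a (Some st)) => [s|] /=; [rewrite IH | rewrite !run_None].
Qed.

Lemma red_cons_pos M (c : letter M) v : is_pos c -> red (c :: v) = omap (cons c) (red v).
Proof.
move=> pc; rewrite !red_run run_cons.
have -> : step c (Some [::]) = Some ([::] ++ [:: c]) by case: c pc.
rewrite run_bottom //; case: (run _ v) => //= s.
by rewrite cats1 rev_rcons.
Qed.

Lemma red_rcons_neg M (o : letter M) v : is_neg o -> red (v ++ [:: o]) = omap (fun s => s ++ [:: o]) (red v).
Proof.
move=> no; rewrite !red_run run_cat; case: (run _ v) => [s|] //.
by rewrite run_cons step_neg //= rev_cons cats1.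
Qed.

Lemma run_negs M (v : seq (letter M)) st : all (@is_neg M) v -> run (Some st) v = Some (rev v ++ st).
Proof.
elim: v st => [//|a v IH] st /= /andP[na nv]; rewrite run_cons step_neg // IH //.
by rewrite rev_cons -cats1 -catA.
Qed.

Lemma run_poss M (v : seq (letter M)) st : all (@is_pos M) v -> all (@is_pos M) st ->
  run (Some st) v = Some (rev v ++ st).
Proof.
elim: v st => [//|a v IH] st /= /andP[na nv] pst; rewrite run_cons step_posP // IH //=.
  by rewrite rev_cons -cats1 -catA.
by rewrite na.
Qed.

Lemma red_negs M (v : seq (letter M)) : all (@is_neg M) v -> red v = Some v.
Proof. by move=> h; rewrite red_run run_negs //= cats0 revK. Qed.

Lemma red_poss M (v : seq (letter M)) : all (@is_pos M) v -> red v = Some v.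
Proof. by move=> h; rewrite red_run run_poss //= cats0 revK. Qed.

Lemma run_suffix M (v : seq (letter M)) : forall N P T,
  all (@is_neg M) N -> all (@is_pos M) P ->
  run (Some (N ++ T)) v <> None -> run (Some (N ++ P)) v <> None.
Proof.
elim: v => [|a v IH] N P T nN pP; first by [].
rewrite !run_cons.
case na: (is_neg a).
  rewrite !step_neg // => h.
  by apply: (IH (a :: N) P T) => //=; rewrite na.
have pa : is_pos a by rewrite pos_neg na.
case: N nN => [|n0 N1].
  rewrite !cat0s => _; rewrite [step a (Some P)]step_posP //.
  case e: (step a (Some T)) => [T'|]; last by rewrite run_None.
  by move=> h; apply: (IH [::] (a :: P) T') => //=; rewrite pa.
move=> /= /andP[nn0 nN1].
case: a na pa => // i _ _; case: n0 nn0 => // _;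
  try (by rewrite /= run_None); by apply: IH.
Qed.

Lemma red_catr M (x y : seq (letter M)) : red (x ++ y) <> None -> red y <> None.
Proof.
rewrite !red_run run_cat; case e: (run _ x) => [st|]; last by rewrite run_None.
move=> h; have h' : run (Some ([::] ++ st)) y <> None by case: (run _ y) h.
by have := run_suffix (N:=[::]) (P:=[::]) isT isT h'; case: (run _ y).
Qed.

Lemma red_catl M (x y : seq (letter M)) : red (x ++ y) <> None -> red x <> None.
Proof.
rewrite !red_run run_cat; case e: (run _ x) => [st|] //.
by rewrite run_None.
Qed.

Definition matchp M (o c : letter M) : bool :=
  match o, c with Lam, Rho _ => true | Xi, Eta _ => true | _, _ => false end.

Lemma matchp_neg M (o c : letter M) : matchp o c -> is_neg o.
Proof. by case: o; case: c. Qed.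
Lemma matchp_pos M (o c : letter M) : matchp o c -> is_pos c.
Proof. by case: o; case: c. Qed.

Definition eqr M (x y : seq (letter M)) := forall s, run s x = run s y.

Lemma eqr_refl M (x : seq (letter M)) : eqr x x. Proof. by []. Qed.
Lemma eqr_sym M (x y : seq (letter M)) : eqr x y -> eqr y x. Proof. by move=> h s. Qed.
Lemma eqr_trans M (x y z : seq (letter M)) : eqr x y -> eqr y z -> eqr x z.
Proof. by move=> h1 h2 s; rewrite h1. Qed.
Lemma eqr_cat M (x y x' y' : seq (letter M)) : eqr x y -> eqr x' y' -> eqr (x ++ x') (y ++ y').
Proof. by move=> h1 h2 s; rewrite !run_cat h1 h2. Qed.
Lemma eqr_red M (x y : seq (letter M)) : eqr x y -> red x = red y.
Proof. by move=> h; rewrite !red_run h. Qed.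

Lemma eqr_pair0 M (o c : letter M) : matchp o c -> eqr [:: o; c] [::].
Proof. by case: o; case: c => // i _ [s|] //. Qed.

Lemma eqr_pair M (o c : letter M) a b : matchp o c -> eqr (a ++ [:: o; c] ++ b) (a ++ b).
Proof.
move=> m; apply: eqr_cat => //; rewrite -[b]cat0s catA.
by apply: eqr_cat => //; rewrite cats0; apply: eqr_pair0.
Qed.

Lemma mismatch_None M (o c : letter M) a b : is_neg o -> is_pos c -> ~~ matchp o c ->
  red (a ++ [:: o; c] ++ b) = None.
Proof.
move=> no pc nm; rewrite red_run !run_cat.
case: (run _ a) => [st|]; last by rewrite !run_None.
suff -> : run (Some st) [:: o; c] = None by rewrite run_None.
by case: o no nm => //; case: c pc.
Qed.

Definition pw M (w : seq (letter M)) k := iter k (cat w) [::].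

Lemma eqr_pw M (x y : seq (letter M)) k : eqr x y -> eqr (pw x k) (pw y k).
Proof. by move=> h; elim: k => [//|k IH] /=; apply: eqr_cat. Qed.

Definition XW M (w : seq (letter M)) := forall k, red (pw w k) <> None.

Definition MultC M (cls : mon M -> Prop) (w : seq (letter M)) :=
  exists j, in_Mplus (red (take j w)) /\ in_Mminus (red (drop j w)) /\
            cls (red (drop j w ++ take j w)).

Definition PP M (cls : mon M -> Prop) (w : seq (letter M)) := XW w /\ MultC cls w.

Lemma XW_eqr M (x y : seq (letter M)) : eqr x y -> XW x -> XW y.
Proof. by move=> h hx k; rewrite -(eqr_red (eqr_pw k h)). Qed.

Lemma Mplus_cons M (c : letter M) m : is_pos c -> in_Mplus (omap (cons c) m) <-> in_Mplus m.
Proof.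
move=> pc; case: m => [s|] /=; last by split=> -[? []].
split=> -[t [[<-]]] /=; first by rewrite pc => h; exists s.
by move=> h; exists (c :: s); rewrite /= pc h.
Qed.

Lemma Mminus_rcons M (o : letter M) m : is_neg o -> in_Mminus (omap (fun s => s ++ [:: o]) m) <-> in_Mminus m.
Proof.
move=> no; case: m => [s|] /=; last by split=> -[? []].
split=> -[t [[<-]]] /=.
  by move=> h; exists s; split=> //; move: h; rewrite all_cat => /andP[].
by move=> h; exists (s ++ [:: o]); rewrite all_cat /= no h.
Qed.

Lemma Mminus_cons M (c : letter M) m : is_pos c -> ~ in_Mminus (omap (cons c) m).
Proof.
move=> pc [t [e h]]; case: m e => [s|] //= [et]; subst t.
by move: h pc => /= /andP[nc _]; rewrite pos_neg nc.
Qed.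

Lemma Mplus_rcons M (o : letter M) m : is_neg o -> ~ in_Mplus (omap (fun s => s ++ [:: o]) m).
Proof.
move=> no [t [e h]]; case: m e => [s|] //= [et]; subst t.
by move: h; rewrite all_cat /= pos_neg no andbF.
Qed.

Lemma take_addl T (a s : seq T) i : take (size a + i) (a ++ s) = a ++ take i s.
Proof. by elim: a => //= x a ->. Qed.
Lemma drop_addl T (a s : seq T) i : drop (size a + i) (a ++ s) = drop i s.
Proof. by elim: a => //= *; rewrite add0n drop0. Qed.
Lemma drop_le T (a s : seq T) j : j <= size a -> drop j (a ++ s) = drop j a ++ s.
Proof.
elim: a j => [|x a IH] j; first by case: j => [_|//]; rewrite !drop0.
case: j => [|j] /= h; first by [].
by rewrite IH.
Qed.

Lemma XW_pair M (o c : letter M) a b : matchp o c -> XW (a ++ [:: o; c] ++ b) <-> XW (a ++ b).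
Proof.
move=> m; split; apply: XW_eqr; [|apply: eqr_sym]; exact: eqr_pair.
Qed.

Lemma pair_low M (o c : letter M) a b j : matchp o c -> j <= size a ->
  [/\ eqr (take j (a ++ [:: o; c] ++ b)) (take j (a ++ b)),
      eqr (drop j (a ++ [:: o; c] ++ b)) (drop j (a ++ b)) &
      eqr (drop j (a ++ [:: o; c] ++ b) ++ take j (a ++ [:: o; c] ++ b))
          (drop j (a ++ b) ++ take j (a ++ b))].
Proof.
move=> m hj; rewrite !takel_cat // !drop_le //; split => //.
  exact: (eqr_pair (drop j a) b m).
by rewrite -!catA; apply: (eqr_pair (drop j a) (b ++ take j a) m).
Qed.

Lemma pair_high M (o c : letter M) a b i : matchp o c ->
  [/\ eqr (take (size a + i.+2) (a ++ [:: o; c] ++ b)) (take (size a + i) (a ++ b)),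
      eqr (drop (size a + i.+2) (a ++ [:: o; c] ++ b)) (drop (size a + i) (a ++ b)) &
      eqr (drop (size a + i.+2) (a ++ [:: o; c] ++ b) ++ take (size a + i.+2) (a ++ [:: o; c] ++ b))
          (drop (size a + i) (a ++ b) ++ take (size a + i) (a ++ b))].
Proof.
move=> m; rewrite !take_addl !drop_addl /=; split => //.
  exact: (eqr_pair a (take i b) m).
by rewrite !(catA (drop i b) a); exact: (eqr_pair (drop i b ++ a) (take i b) m).
Qed.

Lemma mult_transfer M (cls : mon M -> Prop) (x1 x2 x3 y1 y2 y3 : seq (letter M)) :
  eqr x1 y1 -> eqr x2 y2 -> eqr x3 y3 ->
  in_Mplus (red x1) /\ in_Mminus (red x2) /\ cls (red x3) ->
  in_Mplus (red y1) /\ in_Mminus (red y2) /\ cls (red y3).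
Proof. by move=> /eqr_red -> /eqr_red -> /eqr_red ->. Qed.

Lemma Mult_pair M cls (o c : letter M) a b : matchp o c ->
  MultC cls (a ++ [:: o; c] ++ b) <-> MultC cls (a ++ b).
Proof.
move=> m; have no := matchp_neg m; have pc := matchp_pos m.
split=> -[j H].
- case: (leqP j (size a)) => hj.
    by case: (pair_low b m hj) => h1 h2 h3; exists j; apply: mult_transfer H.
  move/subnKC: hj H; set k := j - _ => <-.
  case: k => [|i] H.
    exfalso; case: H => hp _; move: hp; rewrite addn0 -addn1 take_addl /=. rewrite red_rcons_neg //.
    by apply: Mplus_rcons.
  case: (@pair_high _ _ _ a b i m) => h1 h2 h3; exists (size a + i).
  by apply: (mult_transfer h1 h2 h3); rewrite -addSnnS.
- case: (leqP j (size a)) => hj.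
    case: (pair_low b m hj) => h1 h2 h3; exists j.
    by apply: mult_transfer H; apply: eqr_sym.
  move/subnKC: hj H; set k := j - _ => <- H.
  case: (@pair_high _ _ _ a b k.+1 m) => h1 h2 h3; exists (size a + k.+3).
  by apply: mult_transfer H; apply: eqr_sym; rewrite // addSnnS.
Qed.

Lemma pw_wrap M (c0 o : letter M) x k : matchp o c0 ->
  eqr (pw (c0 :: x ++ [:: o]) k.+1) (c0 :: pw x k.+1 ++ [:: o]).
Proof.
move=> m; elim: k => [|k IH]; first by rewrite /pw /= !cats0.
have -> : pw (c0 :: x ++ [:: o]) k.+2 = (c0 :: x ++ [:: o]) ++ pw (c0 :: x ++ [:: o]) k.+1 by [].
apply: eqr_trans (eqr_cat (eqr_refl _) IH) _.
have -> : (c0 :: x ++ [:: o]) ++ c0 :: pw x k.+1 ++ [:: o] =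
   [:: c0] ++ (x ++ [:: o; c0] ++ (pw x k.+1 ++ [:: o])) by rewrite /= -!catA.
have -> : c0 :: pw x k.+2 ++ [:: o] = [:: c0] ++ (x ++ (pw x k.+1 ++ [:: o])) by rewrite /= -!catA.
by apply: eqr_cat => //; apply: eqr_pair.
Qed.

Lemma red_wrap M (c0 o : letter M) v : is_pos c0 -> is_neg o ->
  red (c0 :: v ++ [:: o]) = omap (cons c0) (omap (fun s => s ++ [:: o]) (red v)).
Proof. by move=> pc no; rewrite red_cons_pos // red_rcons_neg. Qed.

Lemma XW_wrap M (c0 o : letter M) x : matchp o c0 -> XW (c0 :: x ++ [:: o]) <-> XW x.
Proof.
move=> m; have no := matchp_neg m; have pc := matchp_pos m.
split=> h [|k] //.
  have := h k.+1; rewrite (eqr_red (pw_wrap x k m)) red_wrap //.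
  by case: (red _).
rewrite (eqr_red (pw_wrap x k m)) red_wrap //; move: (h k.+1).
by case: (red _).
Qed.

Lemma Mult_wrap M cls (c0 o : letter M) x : matchp o c0 ->
  MultC cls (c0 :: x ++ [:: o]) <-> MultC cls x.
Proof.
move=> m; have no := matchp_neg m; have pc := matchp_pos m.
split=> -[j [hp [hm hc]]].
- case: j hp hm hc => [|i] hp hm hc.
    by exfalso; move: hm; rewrite drop0 red_cons_pos //; apply: Mminus_cons.
  case: (leqP i (size x)) => hi.
    move: hp hm hc; rewrite /= takel_cat // drop_le // red_cons_pos // red_rcons_neg //.
    move=> /Mplus_cons-/(_ pc) hp /Mminus_rcons-/(_ no) hm hc.
    exists i; split=> //; split=> //.
    by rewrite -catA in hc; rewrite -(eqr_red (eqr_pair (drop i x) (take i x) m)).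
  exfalso; move: hp; rewrite take_oversize; last by rewrite /= size_cat addn1.
  by rewrite -cat_cons red_rcons_neg //; apply: Mplus_rcons.
- have [i [hi e1 e2]] : exists i, [/\ i <= size x, take i x = take j x & drop i x = drop j x].
    case: (leqP j (size x)) => hj; first by exists j.
    exists (size x); rewrite take_size drop_size take_oversize ?drop_oversize //; exact: ltnW.
  exists i.+1; rewrite /= takel_cat // drop_le // red_cons_pos // red_rcons_neg //.
  rewrite e1 e2; split; first by apply/Mplus_cons.
  split; first by apply/Mminus_rcons.
  by rewrite -catA (eqr_red (eqr_pair (drop j x) (take j x) m)).
Qed.

Lemma word_split M (u : seq (letter M)) :
  (exists a o c b, u = a ++ o :: c :: b /\ is_neg o /\ is_pos c) \/
  (exists cs os, u = cs ++ os /\ all (@is_pos M) cs /\ all (@is_neg M) os).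
Proof.
elim: u => [|x u [[a [o [c [b [e [no pc]]]]]] | [cs [os [e [pcs nos]]]]]].
- by right; exists [::], [::].
- by left; exists (x :: a), o, c, b; rewrite e.
- case nx: (is_neg x).
    case: cs e pcs => [|y cs'] e pcs.
      by right; exists [::], (x :: os); rewrite e /= nx nos.
    left; exists [::], x, y, (cs' ++ os); rewrite e.
    by move: pcs => /= /andP[-> _].
  by right; exists (x :: cs), os; rewrite e /= pos_neg nx pcs nos.
Qed.

Lemma map_split_cat (T1 T2 : Type) (f : T1 -> T2) w a b : map f w = a ++ b ->
  exists a1 b1, [/\ w = a1 ++ b1, map f a1 = a & map f b1 = b].
Proof.
move=> e; exists (take (size a) w), (drop (size a) w).
by rewrite cat_take_drop map_take map_drop e take_size_cat // drop_size_cat.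
Qed.

Lemma map_split_pair (T1 T2 : Type) (f : T1 -> T2) w a y z b : map f w = a ++ y :: z :: b ->
  exists a1 y1 z1 b1, [/\ w = a1 ++ y1 :: z1 :: b1, map f a1 = a, f y1 = y, f z1 = z & map f b1 = b].
Proof.
move=> /map_split_cat [a1 [r [-> e1]]].
case: r => [|y1 [|z1 b1]] //= [e2 e3 e4].
by exists a1, y1, z1, b1.
Qed.

Lemma map_split_wrap (T1 T2 : Type) (f : T1 -> T2) w c x o : map f w = c :: x ++ [:: o] ->
  exists c1 x1 o1, [/\ w = c1 :: x1 ++ [:: o1], f c1 = c, map f x1 = x & f o1 = o].
Proof.
case: w => [|c1 w] //= [e1] /map_split_cat [x1 [r [-> e2]]].
case: r => [|o1 [|]] //= [e3].
by exists c1, x1, o1.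
Qed.

Lemma force_match M (o c : letter M) a b : red (a ++ [:: o; c] ++ b) <> None ->
  is_neg o -> is_pos c -> matchp o c.
Proof.
move=> h no pc; case mm: (matchp o c) => //.
by exfalso; apply: h; apply: mismatch_None; rewrite ?mm.
Qed.

Definition Good M (phi : letter M -> letter M) (cls : mon M -> Prop) u :=
  (exists w, PP cls w /\ map phi w = u) /\
  (forall w1 w2, PP cls w1 -> PP cls w2 -> map phi w1 = u -> map phi w2 = u -> w1 = w2).

Lemma generic M (phi : letter M -> letter M) (T : letter M -> bool) (cls : mon M -> Prop)
  (phi_neg : forall a, is_neg (phi a) = is_neg a)
  (pair_ex : forall o c, T o -> T c -> is_neg o -> is_pos c ->
     exists o' c', [/\ phi o' = o, phi c' = c & matchp o' c'])
  (pair_uniq : forall o1 c1 o2 c2, phi o1 = phi o2 -> phi c1 = phi c2 ->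
     matchp o1 c1 -> matchp o2 c2 -> o1 = o2 /\ c1 = c2)
  (base : forall u, all T u -> all (@is_neg M) u \/ all (@is_pos M) u -> Good phi cls u) :
  forall u, all T u -> Good phi cls u.
Proof.
have phi_pos : forall a, is_pos (phi a) = is_pos a by move=> a; rewrite !pos_neg phi_neg.
move=> u; move: {2}(size u) (leqnn (size u)) => n; elim: n u => [|n IH] u hs hT.
  by case: u hs hT => // _ _; apply: base => //; left.
case: (word_split u) => [[a [o [c [b [e [no pc]]]]]] | [cs [os [e [pcs nos]]]]].
- subst u; move: hT; rewrite all_cat /= => /andP[hTa /and3P[hTo hTc hTb]].
  have hs' : size (a ++ b) <= n by move: hs; rewrite !size_cat /= !addnS ltnS => /ltnW.
  have hT' : all T (a ++ b) by rewrite all_cat hTa hTb.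
  have [[w' [[hX hM] hm]] huniq] := IH (a ++ b) hs' hT'.
  split.
    have [o' [c' [e1 e2 m]]] := pair_ex o c hTo hTc no pc.
    have [a1 [b1 [ew ea eb]]] := map_split_cat hm; subst w'.
    exists (a1 ++ [:: o'; c'] ++ b1); split; last by rewrite map_cat /= e1 e2 ea eb.
    by split; [apply/(XW_pair a1 b1 m) | apply/(Mult_pair _ a1 b1 m)].
  move=> w1 w2 [X1 M1] [X2 M2] m1 m2.
  have [a1 [o1 [c1 [b1 [ew1 ea1 eo1 ec1 eb1]]]]] := map_split_pair m1.
  have [a2 [o2 [c2 [b2 [ew2 ea2 eo2 ec2 eb2]]]]] := map_split_pair m2.
  subst w1 w2.
  have mt1 : matchp o1 c1.
    apply: (@force_match _ _ _ a1 b1); first by have := X1 1; rewrite /pw /= cats0.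
      by rewrite -phi_neg eo1.
    by rewrite -phi_pos ec1.
  have mt2 : matchp o2 c2.
    apply: (@force_match _ _ _ a2 b2); first by have := X2 1; rewrite /pw /= cats0.
      by rewrite -phi_neg eo2.
    by rewrite -phi_pos ec2.
  have e12 : a1 ++ b1 = a2 ++ b2.
    apply: huniq.
    + by split; [apply/(XW_pair _ _ mt1) | apply/(Mult_pair _ _ _ mt1)].
    + by split; [apply/(XW_pair _ _ mt2) | apply/(Mult_pair _ _ _ mt2)].
    + by rewrite map_cat ea1 eb1.
    + by rewrite map_cat ea2 eb2.
  have sa : size a1 = size a2 by rewrite -(size_map phi) ea1 -ea2 size_map.
  have ea : a1 = a2.
    by rewrite -[a1](take_size_cat b1 (erefl (size a1))) e12 (take_size_cat _ (esym sa)).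
  have eb : b1 = b2.
    by rewrite -[b1](drop_size_cat b1 (erefl (size a1))) e12 (drop_size_cat _ (esym sa)).
  have [-> ->] := pair_uniq o1 c1 o2 c2 (etrans eo1 (esym eo2)) (etrans ec1 (esym ec2)) mt1 mt2.
  by rewrite ea eb.
- case: cs e pcs => [|c0 cs'] e pcs.
    by apply: base => //; left; rewrite e.
  case/lastP: os e nos => [|os' o] e nos.
    by apply: base => //; right; rewrite e cats0.
  have eu : u = c0 :: (cs' ++ os') ++ [:: o] by rewrite e -cats1 /= -!catA.
  rewrite eu in hT hs; rewrite eu; clear e eu.
  move: pcs nos => /= /andP[pc0 pcs']; rewrite -cats1 all_cat /= andbT => /andP[nos' no].
  move: hT => /= /andP[hTc0]; rewrite !all_cat /= andbT => /andP[/andP[hTc hTos] hTo].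
  have hs' : size (cs' ++ os') <= n.
    by move: hs; rewrite /= size_cat /= addn1 ltnS => /ltnW.
  have hT'' : all T (cs' ++ os') by rewrite all_cat hTc hTos.
  have [[w' [[hX hM] hm]] huniq] := IH _ hs' hT''.
  split.
    have [o' [c' [e1 e2 m]]] := pair_ex o c0 hTo hTc0 no pc0.
    exists (c' :: w' ++ [:: o']); split; last by rewrite /= map_cat /= e1 e2 hm.
    by split; [apply/(XW_wrap _ m) | apply/(Mult_wrap _ _ m)].
  move=> w1 w2 [X1 M1] [X2 M2] m1 m2.
  have [c1 [x1 [o1 [ew1 ec1 ex1 eo1]]]] := map_split_wrap m1.
  have [c2 [x2 [o2 [ew2 ec2 ex2 eo2]]]] := map_split_wrap m2.
  subst w1 w2.
  have mt1 : matchp o1 c1.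
    apply: (@force_match _ _ _ (c1 :: x1) (x1 ++ [:: o1])).
      by have := X1 2; rewrite /pw /= cats0 -!catA.
      by rewrite -phi_neg eo1.
    by rewrite -phi_pos ec1.
  have mt2 : matchp o2 c2.
    apply: (@force_match _ _ _ (c2 :: x2) (x2 ++ [:: o2])).
      by have := X2 2; rewrite /pw /= cats0 -!catA.
      by rewrite -phi_neg eo2.
    by rewrite -phi_pos ec2.
  have e12 : x1 = x2.
    apply: huniq; rewrite ?ex1 ?ex2 //.
      by split; [apply/(XW_wrap _ mt1) | apply/(Mult_wrap _ _ mt1)].
    by split; [apply/(XW_wrap _ mt2) | apply/(Mult_wrap _ _ mt2)].
  have [-> ->] := pair_uniq o1 c1 o2 c2 (etrans eo1 (esym eo2)) (etrans ec1 (esym ec2)) mt1 mt2.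
  by rewrite e12.
Qed.

Lemma iter_shift M (x : int -> letter M) k i : iter k (@shift M) x i = x (i + k%:Z)%R.
Proof.
elim: k i => [|k IH] i /=; first by rewrite addr0.
rewrite /shift IH; congr x; lia.
Qed.

Definition per M n (x : int -> letter M) := forall i, x (i + n%:Z)%R = x i.

Lemma per_mul M n (x : int -> letter M) : per n x -> forall k i, x (i + (k * n)%:Z)%R = x i.
Proof.
move=> hp; elim=> [|k IH] i; first by rewrite mul0n addr0.
have -> : (i + (k.+1 * n)%:Z = (i + (k * n)%:Z) + n%:Z)%R by rewrite mulSn; lia.
by rewrite hp IH.
Qed.

Lemma per_int M n (x : int -> letter M) : per n x -> forall (q : int) j, x (j + q * n%:Z)%R = x j.
Proof.
move=> hp [k|k] j.
  by rewrite -PoszM per_mul.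
have e : j = ((j + Negz k * n%:Z) + (k.+1 * n)%:Z)%R by rewrite NegzE; lia.
by rewrite [in RHS]e per_mul.
Qed.

Lemma per_mod M n (x : int -> letter M) : per n x -> forall i t, x (i + t)%R = x ((i %% n)%Z + t)%R.
Proof.
move=> hp i t; rewrite {1}(divz_eq i n).
rewrite -(per_int hp (i %/ n)%Z ((i %% n)%Z + t)); congr x; lia.
Qed.

Lemma mod_nat (i : int) (n : nat) : (0 < n)%N -> exists r : nat, (i %% n)%Z = r /\ (r < n)%N.
Proof.
move=> hn; have h0 : (0 <= (i %% n)%Z)%R by apply: modz_ge0; rewrite eqz_nat -lt0n.
have h1 : ((i %% n)%Z < n)%R by apply: ltz_pmod; rewrite ltz_nat.
by case: (i %% n)%Z h0 h1 => // r _ h1; exists r; split=> //; rewrite -ltz_nat.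
Qed.

Lemma block_add M (x : int -> letter M) j a b :
  block x j (a + b) = block x j a ++ block x (j + a%:Z)%R b.
Proof.
rewrite /block iotaD map_cat add0n; congr (_ ++ _).
rewrite -[in iota a b](addn0 a) iotaDl -map_comp; apply: eq_map => k /=.
by congr x; rewrite PoszD addrA.
Qed.

Lemma block_per M n (x : int -> letter M) j L : per n x -> block x (j + n%:Z)%R L = block x j L.
Proof.
move=> hp; apply: eq_map => k; rewrite -addrA (addrC (Posz n)) addrA; exact: hp.
Qed.

Lemma block_pw M n (x : int -> letter M) k : per n x -> block x 0 (k * n) = pw (block x 0 n) k.
Proof.
move=> hp; elim: k => [|k IH]; first by rewrite mul0n.
rewrite mulSn block_add; have := block_per 0 (k * n) hp; rewrite add0r => ->.
by rewrite IH.
Qed.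

Lemma inX_XW M n (x : int -> letter M) : (0 < n)%N -> per n x -> in_X x <-> XW (block x 0 n).
Proof.
move=> hn hp; split.
  move=> hX [|k]; first by [].
  rewrite -block_pw //.
  have -> : (k.+1 * n = (k.+1 * n).-1.+1)%N by rewrite prednK // muln_gt0.
  exact: hX.
move=> hW i L.
have [r [er hr]] := mod_nat i hn.
have -> : block x i L.+1 = block x r L.+1.
  by apply: eq_map => t; rewrite (per_mod hp i) er.
set K := (r + L.+1)%N.
have hK : (K <= K * n)%N by rewrite leq_pmulr.
have := hW K; rewrite -block_pw // -(subnKC hK) block_add.
move=> /red_catl; rewrite /K block_add add0r.
by move=> /red_catr.
Qed.

Definition ext M (w : seq (letter M)) (n : nat) (i : int) : letter M := nth Lam w `|(i %% n)%Z|%N.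

Lemma ext_per M (w : seq (letter M)) n : per n (ext w n).
Proof. by move=> i; rewrite /ext modzDr. Qed.

Lemma ext_block M (w : seq (letter M)) n : size w = n -> block (ext w n) 0 n = w.
Proof.
move=> sw; apply: (@eq_from_nth _ Lam); first by rewrite size_map size_iota.
rewrite size_map size_iota => k hk.
rewrite (nth_map 0%N); last by rewrite size_iota.
by rewrite nth_iota // add0n add0r /ext modz_small //; apply/andP; split => //; rewrite ltz_nat.
Qed.

Lemma block_nth M (x : int -> letter M) n k : (k < n)%N -> nth Lam (block x 0 n) k = x k.
Proof.
move=> hk; rewrite (nth_map 0%N); last by rewrite size_iota.
by rewrite nth_iota // add0n add0r.
Qed.

Lemma per_det M n (x1 x2 : int -> letter M) : (0 < n)%N -> per n x1 -> per n x2 ->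
  block x1 0 n = block x2 0 n -> x1 = x2.
Proof.
move=> hn h1 h2 e; apply: functional_extensionality => i.
have [r [er hr]] := mod_nat i hn.
rewrite -[i]addr0 (per_mod h1 i) (per_mod h2 i) er addr0.
by rewrite -(block_nth x1 hr) -(block_nth x2 hr) e.
Qed.

Lemma mult_equiv M (cls : mon M -> Prop) w :
  (exists m, is_multiplier w m /\ cls m) <-> MultC cls w.
Proof.
split.
  move=> [m [[ap [am [-> [hp [hm ->]]]]] hc]].
  exists (size ap); rewrite take_size_cat // drop_size_cat //.
move=> [j [hp [hm hc]]]; exists (red (drop j w ++ take j w)); split => //.
by exists (take j w), (drop j w); rewrite cat_take_drop.
Qed.

Lemma bij_of (A B : Type) (f : A -> B) : injective f -> (forall b, exists a, f a = b) -> bijective f.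
Proof.
move=> hi hs.
pose g b := proj1_sig (constructive_indefinite_description _ (hs b)).
exists g => [a|b]; last by rewrite /g; case: constructive_indefinite_description.
apply: hi; rewrite /g; by case: constructive_indefinite_description.
Qed.

Lemma all_T (X : Type) (p : pred X) s : (forall a, p a) -> all p s.
Proof. by move=> h; elim: s => //= a s ->; rewrite h. Qed.

Lemma final_gen M n (E : Type) (enc : letter M -> E) (dec : E -> letter M)
  (cls : mon M -> Prop) (T : letter M -> bool)
  (encK : forall e, enc (dec e) = e) (Tdec : forall e, T (dec e))
  (good : forall u, all T u -> Good (fun a => dec (enc a)) cls u) : (0 < n)%N ->
  exists f : {x : int -> letter M | in_Pn n x /\ exists m, is_multiplier (defblock n x) m /\ cls m}
     -> n.-tuple E, bijective f.
Proof.
move=> hn.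
have perP : forall x : int -> letter M, iter n (@shift M) x = x -> per n x.
  by move=> x e i; rewrite -iter_shift e.
have PPof : forall x : {x : int -> letter M | in_Pn n x /\ exists m, is_multiplier (defblock n x) m /\ cls m},
   PP cls (block (sval x) 0 n).
  move=> [x [[hX hI] hM]] /=; split; first by apply/(inX_XW hn (perP _ hI)).
  by apply/mult_equiv.
exists (fun x => [tuple enc (sval x (Posz i)) | i < n]); apply: bij_of.
  move=> [x1 p1] [x2 p2] e.
  apply: eq_sig_hprop => /=; first by move=> *; apply: proof_irrelevance.
  have h1 := PPof (exist _ x1 p1); have h2 := PPof (exist _ x2 p2); simpl in h1, h2.
  have i1 := proj2 (proj1 p1); have i2 := proj2 (proj1 p2).
  apply: per_det hn (perP _ i1) (perP _ i2) _.
  set u := map (fun a => dec (enc a)) (block x1 0 n).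
  have hT : all T u by rewrite all_map; apply: all_T => a /=; apply: Tdec.
  apply: (proj2 (good u hT)) => //.
  apply: (@eq_from_nth _ Lam); first by rewrite !size_map.
  rewrite size_map size_map size_iota => k hk.
  rewrite !(nth_map Lam) ?size_map ?size_iota // !block_nth //.
  have := congr1 (fun t => tnth t (Ordinal hk)) e.
  by rewrite !tnth_mktuple /= => ->.
move=> t.
set u := map dec (val t).
have hT : all T u by rewrite all_map; apply: all_T => a /=; apply: Tdec.
have [[w [hw hm]] _] := good u hT.
have sw : size w = n by rewrite -(size_map (fun a => dec (enc a))) hm size_map size_tuple.
have hI : iter n (@shift M) (ext w n) = ext w n.
  by apply: functional_extensionality => i; rewrite iter_shift ext_per.
have hX : in_X (ext w n) by apply/(inX_XW hn (ext_per w n)); rewrite ext_block //; case: hw.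
have hMu : exists m, is_multiplier (defblock n (ext w n)) m /\ cls m.
  by apply/mult_equiv; rewrite /defblock ext_block //; case: hw.
exists (exist _ (ext w n) (conj (conj hX hI) hMu)).
apply: eq_from_tnth => i; rewrite tnth_mktuple /=.
have hi : (i < size w)%N by rewrite sw.
have : nth (dec (enc Lam)) (map (fun a => dec (enc a)) w) i = nth (dec (enc Lam)) u i by rewrite hm.
rewrite (nth_map Lam) // /u (nth_map (enc Lam)) ?size_tuple // => h.
have -> : ext w n i = nth Lam w i.
  by rewrite /ext modz_small //; apply/andP; split => //; rewrite ltz_nat ltn_ord.
by rewrite (tnth_nth (enc Lam)); move/(congr1 enc): h; rewrite !encK.
Qed.

Lemma all_pw M (p : pred (letter M)) w k : all p w -> all p (pw w k).
Proof. by move=> h; elim: k => //= k IH; rewrite all_cat h IH. Qed.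

Lemma map_fix (X : Type) (f : X -> X) (p : pred X) u :
  (forall a, p a -> f a = a) -> all p u -> map f u = u.
Proof. by move=> h; elim: u => //= a u IH /andP[pa pu]; rewrite h // IH. Qed.

Lemma all_np M (u : seq (letter M)) : all (@is_neg M) u -> all (@is_pos M) u -> u = [::].
Proof. by case: u => //= a u /andP[na _] /andP[pa _]; move: pa; rewrite pos_neg na. Qed.

Lemma all_pull (X : Type) (f : X -> X) (p q : pred X) w :
  (forall a, p (f a) -> q a) -> all p (map f w) -> all q w.
Proof. by move=> h; elim: w => //= a w IH /andP[pa pw]; rewrite h // IH. Qed.

Lemma all_and (X : Type) (p q r : pred X) u :
  (forall a, p a -> q a -> r a) -> all p u -> all q u -> all r u.
Proof. by move=> h; elim: u => //= a u IH /andP[pa pu] /andP[qa qu]; rewrite h // IH. Qed.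

Lemma all_take_drop (X : Type) (p : pred X) w j : all p w -> all p (take j w) /\ all p (drop j w).
Proof. by rewrite -{1}(cat_take_drop j w) all_cat => /andP. Qed.

Definition isLam M (a : letter M) : bool := match a with Lam => true | _ => false end.

Lemma nseq_Lam M (u : seq (letter M)) : all (@isLam M) u -> u = nseq (size u) Lam.
Proof. by elim: u => //= a u IH /andP[]; case: a => // _ /IH <-. Qed.

Lemma Lam_nseq M k : all (@isLam M) (nseq k Lam).
Proof. by elim: k. Qed.

Lemma Mplus_nil M : in_Mplus (Some ([::] : seq (letter M))).
Proof. by exists [::]. Qed.
Lemma Mminus_nil M : in_Mminus (Some ([::] : seq (letter M))).
Proof. by exists [::]. Qed.

Lemma phi_negs_pull M (phi : letter M -> letter M) (phi_neg : forall a, is_neg (phi a) = is_neg a) w :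
  all (@is_neg M) (map phi w) -> all (@is_neg M) w.
Proof. by apply: all_pull => a; rewrite phi_neg. Qed.
Lemma phi_poss_pull M (phi : letter M -> letter M) (phi_neg : forall a, is_neg (phi a) = is_neg a) w :
  all (@is_pos M) (map phi w) -> all (@is_pos M) w.
Proof. by apply: all_pull => a; rewrite !pos_neg phi_neg. Qed.

Definition enc1 M (a : letter M) : edge1' M :=
  match a with Lam | Xi => @E1'Lam M | Rho i => E1'Rho i | Eta i => E1'Eta i end.
Definition dec1 M (e : edge1' M) : letter M :=
  match e with E1'Lam => Lam | E1'Rho i => Rho i | E1'Eta i => Eta i end.
Definition T1 M (a : letter M) : bool := match a with Xi => false | _ => true end.
Definition cls1 M (m : mon M) := mult_positive m \/ mult_neutral m \/ mult_lambda_power m.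

Lemma PP1_neg M (w : seq (letter M)) : PP (@cls1 M) w -> all (@is_neg M) w -> all (@isLam M) w.
Proof.
move=> [_ [j [hp [hm hc]]]] nw.
have [nt nd] := all_take_drop j nw.
move: hp; rewrite red_negs // => -[s [[<-]] ps].
have et := all_np nt ps.
have ed : drop j w = w by rewrite -{2}(cat_take_drop j w) et.
move: hc; rewrite et ed cats0 red_negs // => -[[[t [[<-] ps']] ne]|[[->]//|[k [_ [->]]]]].
  by case: ne; rewrite (all_np nw ps').
exact: Lam_nseq.
Qed.

Lemma good1 M u : all (@T1 M) u -> Good (fun a => dec1 (enc1 a)) (@cls1 M) u.
Proof.
apply: generic.
- by case.
- move=> o c; case: o => // _; case: c => // i _ _ _.
    by exists Lam, (Rho i); split.
  by exists Xi, (Eta i); split.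
- by move=> [||i1|i1] [||j1|j1] [||i2|i2] [||j2|j2] //= *; split; congruence.
move=> {}u hT [nu|pu].
  have hL : all (@isLam M) u by apply: (all_and _ hT nu) => -[].
  have fixL : map (fun a => dec1 (enc1 a)) u = u by apply: (map_fix _ hL) => -[].
  split.
    exists u; split => //; split.
      by move=> k; rewrite red_negs //; apply: all_pw.
    exists 0%N; rewrite take0 drop0 cats0 !red_negs //; split; first exact: Mplus_nil.
    split; first by exists u.
    case: u {hT nu fixL} hL => [|a u] hL; first by right; left.
    right; right; exists (size (a :: u)); split => //.
    by rewrite -nseq_Lam.
  move=> w1 w2 h1 h2 m1 m2.
  have n1 : all (@is_neg M) w1 by apply: (phi_negs_pull (phi:=fun a => dec1 (enc1 a))); [case|rewrite m1].
  have n2 : all (@is_neg M) w2 by apply: (phi_negs_pull (phi:=fun a => dec1 (enc1 a))); [case|rewrite m2].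
  rewrite -(map_fix (f:=fun a => dec1 (enc1 a)) _ (PP1_neg h1 n1)); last by case.
  rewrite -(map_fix (f:=fun a => dec1 (enc1 a)) _ (PP1_neg h2 n2)) ?m1 ?m2 //; by case.
have fixP : forall w, all (@is_pos M) w -> map (fun a => dec1 (enc1 a)) w = w.
  by move=> w; apply: map_fix => -[].
split.
  exists u; split; last exact: fixP.
  split; first by move=> k; rewrite red_poss //; apply: all_pw.
  exists (size u); rewrite take_size drop_size !red_poss //; split; first by exists u.
  split; first exact: Mminus_nil.
  case: u {hT fixP} pu => [|a u] pu; first by right; left.
  by left; split; [exists (a :: u) | case].
move=> w1 w2 _ _ m1 m2.
have p1 : all (@is_pos M) w1 by apply: (phi_poss_pull (phi:=fun a => dec1 (enc1 a))); [case|rewrite m1].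
have p2 : all (@is_pos M) w2 by apply: (phi_poss_pull (phi:=fun a => dec1 (enc1 a))); [case|rewrite m2].
by rewrite -(fixP _ p1) m1 -m2 fixP.
Qed.

Definition enc2 M (a : letter M) : edge1'' M :=
  match a with Lam => @E1''Lam M | Xi => @E1''Xi M | Rho i => E1''Rho i | Eta i => E1''Rho i end.
Definition dec2 M (e : edge1'' M) : letter M :=
  match e with E1''Lam => Lam | E1''Xi => Xi | E1''Rho i => Rho i end.
Definition T2 M (a : letter M) : bool := match a with Eta _ => false | _ => true end.
Definition cls2 M (m : mon M) := mult_negative m \/ mult_neutral m \/ mult_rho_nonid m.

Lemma PP2_pos M (w : seq (letter M)) : PP (@cls2 M) w -> all (@is_pos M) w -> all (@is_rho M) w.
Proof.
move=> [_ [j [hp [hm hc]]]] pw.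
have [pt pd] := all_take_drop j pw.
move: hm; rewrite red_poss // => -[s [[<-]] ns].
have ed := all_np ns pd.
have et : take j w = w by rewrite -{2}(cat_take_drop j w) ed cats0.
move: hc; rewrite et ed cat0s red_poss // => -[[[t [[<-] ns']] ne]|[[->]//|[t [[<-] [hr _]]]]] //.
by case: ne; rewrite (all_np ns' pw).
Qed.

Lemma good2 M u : all (@T2 M) u -> Good (fun a => dec2 (enc2 a)) (@cls2 M) u.
Proof.
apply: generic.
- by case.
- move=> o c; case: c => // i _ _; case: o => // _ _.
    by exists Lam, (Rho i); split.
  by exists Xi, (Eta i); split.
- by move=> [||i1|i1] [||j1|j1] [||i2|i2] [||j2|j2] //= *; split; congruence.
move=> {}u hT [nu|pu].
  have fixN : forall w, all (@is_neg M) w -> map (fun a => dec2 (enc2 a)) w = w.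
    by move=> w; apply: map_fix => -[].
  split.
    exists u; split; last exact: fixN.
    split; first by move=> k; rewrite red_negs //; apply: all_pw.
    exists 0%N; rewrite take0 drop0 cats0 !red_negs //; split; first exact: Mplus_nil.
    split; first by exists u.
    case: u {hT fixN} nu => [|a u] nu; first by right; left.
    by left; split; [exists (a :: u) | case].
  move=> w1 w2 _ _ m1 m2.
  have n1 : all (@is_neg M) w1 by apply: (phi_negs_pull (phi:=fun a => dec2 (enc2 a))); [case|rewrite m1].
  have n2 : all (@is_neg M) w2 by apply: (phi_negs_pull (phi:=fun a => dec2 (enc2 a))); [case|rewrite m2].
  by rewrite -(fixN _ n1) m1 -m2 fixN.
have hR : all (@is_rho M) u by apply: (all_and _ hT pu) => -[].
have fixR : forall w, all (@is_rho M) w -> map (fun a => dec2 (enc2 a)) w = w.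
  by move=> w; apply: map_fix => -[].
split.
  exists u; split; last exact: fixR.
  split; first by move=> k; rewrite red_poss //; apply: all_pw.
  exists (size u); rewrite take_size drop_size !red_poss //; split; first by exists u.
  split; first exact: Mminus_nil.
  case: u {hT pu fixR} hR => [|a u] hR; first by right; left.
  by right; right; exists (a :: u).
move=> w1 w2 h1 h2 m1 m2.
have p1 : all (@is_pos M) w1 by apply: (phi_poss_pull (phi:=fun a => dec2 (enc2 a))); [case|rewrite m1].
have p2 : all (@is_pos M) w2 by apply: (phi_poss_pull (phi:=fun a => dec2 (enc2 a))); [case|rewrite m2].
by rewrite -(fixR _ (PP2_pos h1 p1)) m1 -m2 fixR // (PP2_pos h2 p2).
Qed.

Theorem lemma3p1 (M n : nat) : (1 <= n)%N ->
  (exists f : Pn_set1 M n -> Bn (edge1' M) n, bijective f) /\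
  (exists g : Pn_set2 M n -> Bn (edge1'' M) n, bijective g).
Proof.
move=> hn; split.
  apply: (@final_gen M n _ (@enc1 M) (@dec1 M) (@cls1 M) (@T1 M)) => //.
  - by case.
  - by case.
  - exact: good1.
apply: (@final_gen M n _ (@enc2 M) (@dec2 M) (@cls2 M) (@T2 M)) => //.
- by case.
- by case.
- exact: good2.
Qed.
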